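(* Let $f:[0,\infty)\to[0,\infty)$ be continuous and assume its Hirsch function $h_f$ is well defined on $(0,\infty)$. Then the following are equivalent: (a) $h_f(\theta)=f(f(\theta))$ for all $\theta>0$; (b) $f(f(f(x)))=x\,f(f(x))$ for all $x\ge 0$.
   Context: Hirsch function: for $f:[0,\infty)\to[0,\infty)$ and $\theta>0$, $h_f(\theta)=x$ if and only if $f(x)=\theta x$, where, if $f(0)=0$, the trivial solution $x=0$ is not taken into account. It is required (for $h_f$ to be a function) that for every $\theta>0$ this equation has exactly one such solution $x$. *)

(* Defs.v *)
From Stdlib Require Import Reals.
Open Scope R_scope.

(* f : [0,oo) -> [0,oo) is modelled by f : R -> R mapping [0,oo) into [0,oo);
   values of f outside [0,oo) play no role. *)
Definition maps_nonneg (f : R -> R) : Prop :=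
  forall x, 0 <= x -> 0 <= f x.

Definition continuous_on_nonneg (f : R -> R) : Prop :=
  forall x, 0 <= x -> limit1_in f (fun y => 0 <= y) (f x) x.

Definition hirsch_sol (f : R -> R) (theta x : R) : Prop :=
  0 <= x /\ f x = theta * x /\ ~ (f 0 = 0 /\ x = 0).

Definition hirsch_well_defined (f : R -> R) : Prop :=
  forall theta, 0 < theta -> exists! x, hirsch_sol f theta x.

(* h_f(theta) = x  (meaningful under hirsch_well_defined f). *)
Definition hirsch_eq (f : R -> R) (theta x : R) : Prop :=
  hirsch_sol f theta x.

(* Main.v *)
Require Import Defs.
From Stdlib Require Import Reals.
From Stdlib Require Import Lra Classical.
Open Scope R_scope.

Definition fe (f : R -> R) (x : R) := f (Rmax 0 x).

Lemma Rmax_lip x y : Rabs (Rmax 0 y - Rmax 0 x) <= Rabs (y - x).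
Proof.
  unfold Rmax, Rabs; repeat destruct (Rle_dec _ _); repeat destruct (Rcase_abs _); lra.
Qed.

Lemma fe_eq f x : 0 <= x -> fe f x = f x.
Proof. intro H; unfold fe; rewrite Rmax_right; auto. Qed.

Lemma fe_cont f : continuous_on_nonneg f -> forall x, continuity_pt (fe f) x.
Proof.
  intros Hc x. unfold continuity_pt, continue_in, limit1_in, limit_in. intros eps He.
  destruct (Hc (Rmax 0 x) (Rmax_l 0 x) eps He) as [d [Hd H]].
  exists d; split; auto. intros y [_ Hy]. unfold fe. simpl in *. unfold R_dist in *.
  apply H. split. apply Rmax_l. eapply Rle_lt_trans; [apply Rmax_lip|]. exact Hy.
Qed.

Lemma cont_eps g x : continuity_pt g x -> forall e, 0 < e ->
  exists d, 0 < d /\ forall y, Rabs (y - x) < d -> Rabs (g y - g x) < e.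
Proof.
  intros H e He. unfold continuity_pt, continue_in, limit1_in, limit_in in H.
  destruct (H e He) as [d [Hd Hy]]. exists d; split; auto.
  intros y Hy'. destruct (Req_dec y x) as [->|Hne].
  { rewrite Rminus_diag, Rabs_R0; auto. }
  apply (Hy y). split; [split; [exact I | auto] | exact Hy'].
Qed.

Lemma fe_nonneg f x : maps_nonneg f -> 0 <= fe f x.
Proof. intro H; unfold fe; apply H, Rmax_l. Qed.

Lemma root_ex f v a b : continuous_on_nonneg f -> a <= b ->
  (f a - v * a) * (f b - v * b) <= 0 -> 0 <= a ->
  exists s, a <= s <= b /\ f s = v * s.
Proof.
  intros Hc Hab Hp Ha.
  assert (Hh : continuity (fun s => fe f s - v * s)).
  { intro s. apply (continuity_pt_minus (fe f) (fun s => v * s)).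
    apply fe_cont; auto.
    apply (continuity_pt_mult (fun _ => v) (fun s => s)).
    apply continuity_pt_const; intros ? ?; auto.
    apply derivable_continuous_pt, derivable_pt_id. }
  destruct (IVT_cor _ a b Hh Hab) as [z [Hz Hz0]].
  { rewrite !fe_eq; lra. }
  exists z; split; auto. rewrite fe_eq in Hz0; lra.
Qed.

Lemma uniq f v y1 y2 : hirsch_well_defined f -> f 0 = 0 -> 0 < v ->
  0 < y1 -> 0 < y2 -> f y1 = v * y1 -> f y2 = v * y2 -> y1 = y2.
Proof.
  intros Hw H0 Hv H1 H2 E1 E2.
  destruct (Hw v Hv) as [x [Hx Hu]].
  assert (A : x = y1) by (apply Hu; repeat split; try lra; auto).
  assert (B : x = y2) by (apply Hu; repeat split; try lra; auto).
  congruence.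
Qed.

Lemma keyK f : maps_nonneg f -> continuous_on_nonneg f -> hirsch_well_defined f ->
  f 0 = 0 -> forall c, 0 < c -> exists d e, 0 < d /\ 0 < e /\
  forall y v, 0 < y -> y < d -> Rabs (v - c) < e -> f y <> v * y.
Proof.
  intros Hn Hc Hw H0 c Hcp.
  destruct (Hw c Hcp) as [ys [[Hys0 [Hys1 Hys2]] _]].
  assert (Hys : 0 < ys) by (destruct Hys0; auto; exfalso; apply Hys2; auto).
  set (a := ys / 2). set (b := 3 * ys / 2).
  assert (Ha : 0 < a) by (unfold a; lra). assert (Hb : 0 < b) by (unfold b; lra).
  set (al := f a / a). set (be := f b / b).
  assert (Ea : f a = al * a) by (unfold al; field; lra).
  assert (Eb : f b = be * b) by (unfold be; field; lra).
  assert (Hal0 : 0 <= al) by (unfold al; apply Rmult_le_pos; [apply Hn; lra | left; apply Rinv_0_lt_compat; lra]).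
  assert (Hbe0 : 0 <= be) by (unfold be; apply Rmult_le_pos; [apply Hn; lra | left; apply Rinv_0_lt_compat; lra]).
  assert (Nal : al <> c).
  { intro E. assert (a = ys) by (apply (uniq f c); auto; rewrite Ea, E; auto). unfold a in *; lra. }
  assert (Nbe : be <> c).
  { intro E. assert (b = ys) by (apply (uniq f c); auto; rewrite Eb, E; auto). unfold b in *; lra. }
  destruct (Rlt_le_dec al c) as [Hac|Hac]; destruct (Rlt_le_dec be c) as [Hbc|Hbc].
  - exfalso. set (v := (Rmax al be + c) / 2).
    assert (Hm1 : al <= Rmax al be) by apply Rmax_l.
    assert (Hm2 : be <= Rmax al be) by apply Rmax_r.
    assert (Hm3 : Rmax al be < c) by (apply Rmax_lub_lt; auto).
    assert (Hv : 0 < v) by (unfold v; lra).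
    destruct (root_ex f v a ys) as [s1 [Hs1 Es1]]; auto; try (unfold a; lra).
    { rewrite Ea, Hys1. assert (0 < (v - al) * (c - v)) by (apply Rmult_lt_0_compat; unfold v in *; lra).
      replace ((al * a - v * a) * (c * ys - v * ys)) with (- (a * ys) * ((v - al) * (c - v))) by ring.
      assert (0 < a * ys) by (apply Rmult_lt_0_compat; lra). nra. }
    destruct (root_ex f v ys b) as [s2 [Hs2 Es2]]; auto; try (unfold b; lra).
    { rewrite Eb, Hys1. assert (0 < (v - be) * (c - v)) by (apply Rmult_lt_0_compat; unfold v in *; lra).
      replace ((c * ys - v * ys) * (be * b - v * b)) with (- (b * ys) * ((v - be) * (c - v))) by ring.
      assert (0 < b * ys) by (apply Rmult_lt_0_compat; lra). nra. }
    assert (s1 <> ys) by (intro; subst s1; rewrite Hys1 in Es1; assert (c = v) by (apply (Rmult_eq_reg_r ys); lra); unfold v in *; lra).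
    assert (s2 <> ys) by (intro; subst s2; rewrite Hys1 in Es2; assert (c = v) by (apply (Rmult_eq_reg_r ys); lra); unfold v in *; lra).
    assert (s1 = s2) by (apply (uniq f v); auto; unfold a in *; lra). lra.
  - exists a, (Rmin (c - al) (be - c)).
    assert (Hbc' : c < be) by lra.
    split; auto. split. apply Rmin_glb_lt; lra.
    intros y v Hy Hya Hv E.
    assert (Hm1 := Rmin_l (c - al) (be - c)). assert (Hm2 := Rmin_r (c - al) (be - c)).
    apply Rabs_def2 in Hv.
    destruct (root_ex f v a b) as [s [Hs Es]]; auto; try (unfold a, b; lra).
    { rewrite Ea, Eb. replace ((al * a - v * a) * (be * b - v * b)) with ((a * b) * ((al - v) * (be - v))) by ring.
      assert (0 < a * b) by (apply Rmult_lt_0_compat; lra).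
      assert ((al - v) * (be - v) < 0) by (apply Ropp_lt_cancel; rewrite Ropp_0; replace (- ((al - v) * (be - v))) with ((v - al) * (be - v)) by ring; apply Rmult_lt_0_compat; lra).
      nra. }
    assert (y = s) by (apply (uniq f v); auto; lra). lra.
  - exists a, (Rmin (al - c) (c - be)).
    assert (Hac' : c < al) by lra.
    split; auto. split. apply Rmin_glb_lt; lra.
    intros y v Hy Hya Hv E.
    assert (Hm1 := Rmin_l (al - c) (c - be)). assert (Hm2 := Rmin_r (al - c) (c - be)).
    apply Rabs_def2 in Hv.
    destruct (root_ex f v a b) as [s [Hs Es]]; auto; try (unfold a, b; lra).
    { rewrite Ea, Eb. replace ((al * a - v * a) * (be * b - v * b)) with ((a * b) * ((al - v) * (be - v))) by ring.
      assert (0 < a * b) by (apply Rmult_lt_0_compat; lra).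
      assert ((al - v) * (be - v) < 0) by (apply Ropp_lt_cancel; rewrite Ropp_0; replace (- ((al - v) * (be - v))) with ((al - v) * (v - be)) by ring; apply Rmult_lt_0_compat; lra).
      nra. }
    assert (y = s) by (apply (uniq f v); auto; lra). lra.
  - exfalso. assert (Hac' : c < al) by lra. assert (Hbc' : c < be) by lra.
    set (v := (Rmin al be + c) / 2).
    assert (Hm1 : Rmin al be <= al) by apply Rmin_l.
    assert (Hm2 : Rmin al be <= be) by apply Rmin_r.
    assert (Hm3 : c < Rmin al be) by (apply Rmin_glb_lt; auto).
    assert (Hv : 0 < v) by (unfold v; lra).
    destruct (root_ex f v a ys) as [s1 [Hs1 Es1]]; auto; try (unfold a; lra).
    { rewrite Ea, Hys1. assert (0 < (al - v) * (v - c)) by (apply Rmult_lt_0_compat; unfold v in *; lra).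
      replace ((al * a - v * a) * (c * ys - v * ys)) with (- (a * ys) * ((al - v) * (v - c))) by ring.
      assert (0 < a * ys) by (apply Rmult_lt_0_compat; lra). nra. }
    destruct (root_ex f v ys b) as [s2 [Hs2 Es2]]; auto; try (unfold b; lra).
    { rewrite Eb, Hys1. assert (0 < (be - v) * (v - c)) by (apply Rmult_lt_0_compat; unfold v in *; lra).
      replace ((c * ys - v * ys) * (be * b - v * b)) with (- (b * ys) * ((be - v) * (v - c))) by ring.
      assert (0 < b * ys) by (apply Rmult_lt_0_compat; lra). nra. }
    assert (s1 <> ys) by (intro; subst s1; rewrite Hys1 in Es1; assert (c = v) by (apply (Rmult_eq_reg_r ys); lra); unfold v in *; lra).
    assert (s2 <> ys) by (intro; subst s2; rewrite Hys1 in Es2; assert (c = v) by (apply (Rmult_eq_reg_r ys); lra); unfold v in *; lra).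
    assert (s1 = s2) by (apply (uniq f v); auto; unfold a in *; lra). lra.
Qed.

Lemma part (P Q : R -> Prop) a b : a < b ->
  (forall x, a <= x <= b -> P x \/ Q x) ->
  (forall x, a <= x <= b -> P x -> Q x -> False) ->
  (forall x, a <= x <= b -> P x -> exists h, 0 < h /\ forall y, a <= y <= b -> Rabs (y - x) < h -> P y) ->
  (forall x, a <= x <= b -> Q x -> exists h, 0 < h /\ forall y, a <= y <= b -> Rabs (y - x) < h -> Q y) ->
  P a -> Q b -> False.
Proof.
  intros Hab Hor Hdis HP HQ Pa Qb.
  set (E := fun x => a <= x <= b /\ P x).
  destruct (completeness E) as [m [Hub Hlub]].
  { exists b. intros x [Hx _]; lra. }
  { exists a. split; auto; lra. }
  assert (Ham : a <= m) by (apply Hub; split; auto; lra).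
  assert (Hmb : m <= b) by (apply Hlub; intros x [Hx _]; lra).
  destruct (Hor m (conj Ham Hmb)) as [Pm|Qm].
  - assert (m < b) by (destruct Hmb; auto; subst m; exfalso; apply (Hdis b); auto; lra).
    destruct (HP m (conj Ham Hmb) Pm) as [h [Hh Hy]].
    set (y := Rmin (m + h / 2) b).
    assert (m < y) by (unfold y; apply Rmin_glb_lt; lra).
    assert (y <= b) by apply Rmin_r. assert (y <= m + h/2) by apply Rmin_l.
    assert (Ey : E y). { split. lra. apply Hy. lra. rewrite Rabs_right; lra. }
    specialize (Hub y Ey). lra.
  - assert (a < m) by (destruct Ham; auto; subst m; exfalso; apply (Hdis a); auto; lra).
    destruct (HQ m (conj Ham Hmb) Qm) as [h [Hh Hy]].
    set (k := Rmin (h / 2) (m - a)).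
    assert (0 < k) by (unfold k; apply Rmin_glb_lt; lra).
    assert (k <= h / 2) by apply Rmin_l.
    destruct (classic (exists x, E x /\ m - k < x)) as [[x [[Hx Px] Hxk]]|Hn].
    + assert (x <= m) by (apply Hub; split; auto).
      apply (Hdis x Hx Px). apply Hy; auto. rewrite Rabs_left1; lra.
    + assert (m <= m - k); [|lra]. apply Hlub. intros x Ex.
      destruct (Rle_lt_dec x (m - k)); auto. exfalso; apply Hn; eauto.
Qed.

Lemma zero_at0 g : continuity_pt g 0 -> (forall y, 0 < y -> g y = 0) -> g 0 = 0.
Proof.
  intros Hc Hz. destruct (Req_dec (g 0) 0) as [|Hn]; auto. exfalso.
  assert (He : 0 < Rabs (g 0)) by (apply Rabs_pos_lt; auto).
  destruct (cont_eps g 0 Hc _ He) as [d [Hd H]].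
  specialize (H (d / 2)). rewrite Hz in H by lra.
  rewrite Rminus_0_r, Rminus_0_l, Rabs_Ropp, Rabs_right in H by lra. lra.
Qed.

Theorem theorem4 (f : R -> R) :
  maps_nonneg f ->
  continuous_on_nonneg f ->
  hirsch_well_defined f ->
  ((forall theta, 0 < theta -> hirsch_eq f theta (f (f theta))) <->
   (forall x, 0 <= x -> f (f (f x)) = x * f (f x))).
Proof.
  intros Hn Hc Hw.
  assert (Fc : forall x, continuity_pt (fun s => fe f (fe f s)) x).
  { intro x. apply (continuity_pt_comp (fe f) (fe f)); apply fe_cont; auto. }
  assert (Fe : forall x, 0 <= x -> fe f (fe f x) = f (f x)).
  { intros x Hx. rewrite (fe_eq f x Hx). apply fe_eq, Hn, Hx. }
  split.
  - intros Ha x Hx.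
    set (G := fun x => fe f (fe f (fe f x)) - x * fe f (fe f x)).
    assert (HG : forall y, 0 < y -> G y = 0).
    { intros y Hy. destruct (Ha y Hy) as [_ [E _]]. unfold G.
      rewrite (fe_eq f y), (fe_eq f (f y)), (fe_eq f (f (f y))); try lra; try (apply Hn; lra);
        try (apply Hn, Hn; lra). }
    destruct Hx as [Hx|<-].
    + specialize (HG x Hx). unfold G in HG.
      rewrite (fe_eq f x), (fe_eq f (f x)), (fe_eq f (f (f x))) in HG; try lra; try (apply Hn; lra);
        try (apply Hn, Hn; lra).
    + assert (G 0 = 0).
      { apply zero_at0; auto. unfold G.
        apply (continuity_pt_minus (fun x => fe f (fe f (fe f x))) (fun x => x * fe f (fe f x))).
        apply (continuity_pt_comp (fe f) (fun s => fe f (fe f s))); [apply fe_cont; auto| apply Fc].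
        apply (continuity_pt_mult (fun x => x) (fun x => fe f (fe f x))); [|apply Fc].
        apply derivable_continuous_pt, derivable_pt_id. }
      unfold G in H. rewrite (fe_eq f 0), (fe_eq f (f 0)), (fe_eq f (f (f 0))) in H; try lra;
        try (apply Hn; lra); try (apply Hn, Hn; lra).
  - intros Hb th Hth. unfold hirsch_eq, hirsch_sol. split; [apply Hn; apply Hn; lra|]. split; [apply Hb; lra|].
    intros [H0 Hz].
    destruct (Hw 1 ltac:(lra)) as [y1 [[Hy0 [Hy1 Hy2]] _]].
    assert (Hy : 0 < y1) by (destruct Hy0; auto; exfalso; apply Hy2; auto).
    rewrite Rmult_1_l in Hy1.
    assert (y1 = 1).
    { pose proof (Hb y1 Hy0) as E. rewrite !Hy1 in E. apply (Rmult_eq_reg_r y1); lra. }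
    subst y1.
    set (P := fun x => 0 < fe f (fe f x)).
    set (Q := fun x => fe f (fe f x) = 0).
    assert (Hor : forall x, P x \/ Q x).
    { intro x. unfold P, Q. destruct (fe_nonneg f (fe f x) Hn); auto. }
    assert (Hdis : forall x, P x -> Q x -> False) by (unfold P, Q; intros x Px Qx; lra).
    assert (OP : forall x, P x -> exists h, 0 < h /\ forall y, Rabs (y - x) < h -> P y).
    { intros x Px. destruct (cont_eps _ x (Fc x) _ Px) as [d [Hd H]].
      exists d; split; auto. intros y Hyy. specialize (H y Hyy). unfold P in *.
      apply Rabs_def2 in H. lra. }
    assert (OQ : forall x, 0 < x -> Q x -> exists h, 0 < h /\ forall y, Rabs (y - x) < h -> Q y).
    { intros x Hx Qx. destruct (keyK f Hn Hc Hw H0 x Hx) as [d [e [Hd [He K]]]].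
      destruct (cont_eps _ x (Fc x) _ Hd) as [h1 [Hh1 H]].
      exists (Rmin h1 (Rmin e x)).
      assert (0 < Rmin e x) by (apply Rmin_glb_lt; auto).
      split; [apply Rmin_glb_lt; auto|].
      intros y Hyy.
      assert (Hm1 := Rmin_l h1 (Rmin e x)). assert (Hm2 := Rmin_r h1 (Rmin e x)).
      assert (Hm3 := Rmin_l e x). assert (Hm4 := Rmin_r e x).
      specialize (H y ltac:(lra)). unfold Q in Qx. rewrite Qx, Rminus_0_r in H.
      pose proof (Rabs_def2 _ _ Hyy) as [Hy1' Hy2'].
      assert (Hyp : 0 < y) by lra.
      destruct (Hor y) as [Py|]; auto. exfalso. unfold P in Py.
      rewrite Fe in Py, H by lra. rewrite Rabs_right in H by lra.
      apply (K (f (f y)) y); [lra|lra|apply Rabs_def1; lra|apply Hb; lra]. }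
    assert (P1 : P 1) by (unfold P; rewrite Fe by lra; rewrite !Hy1; lra).
    assert (Qt : Q th) by (unfold Q; rewrite Fe by lra; auto).
    destruct (Rtotal_order th 1) as [Hlt|[Heq|Hgt]].
    + apply (part Q P th 1 Hlt).
      * intros x _. destruct (Hor x); auto.
      * intros x _ Qx Px; eauto.
      * intros x Hx Qx. destruct (OQ x ltac:(lra) Qx) as [h [Hh H]]; eauto.
      * intros x Hx Px. destruct (OP x Px) as [h [Hh H]]; eauto.
      * exact Qt.
      * exact P1.
    + subst th. unfold P, Q in *; lra.
    + apply (part P Q 1 th Hgt).
      * intros x _. destruct (Hor x); auto.
      * intros x _ Px Qx; eauto.
      * intros x Hx Px. destruct (OP x Px) as [h [Hh H]]; eauto.
      * intros x Hx Qx. destruct (OQ x ltac:(lra) Qx) as [h [Hh H]]; eauto.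
      * exact P1.
      * exact Qt.
Qed.
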